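(* Let $s \geq 3$ be a fixed integer and $q$ a power of an odd prime. The graph $H^b(s,q)$ contains at least $(1 - o(1)) \frac{ q^{4 ( s - 1) } }{4}$ copies of $K_{2,2}$, where $o(1) \to 0$ as $q \to \infty$.
   Context: Let $N: \mathbb{F}_{q^{s-1}} \to \mathbb{F}_q$ be the norm map $N(X) = X^{1 + q + q^2 + \dots + q^{s - 2}}$. $H^b(s,q)$ is the bipartite graph with parts $A$ and $B$, each a disjoint copy of $\mathbb{F}_{q^{s-1}} \times \mathbb{F}_q^*$, where $(x_1,x_2)\in A$ is adjacent to $(y_1,y_2)\in B$ if and only if $N(x_1+y_1) = x_2 y_2$. *)

(* Defs.v *)
From mathcomp Require Import all_boot all_order all_algebra all_field.
Set Implicit Arguments. Unset Strict Implicit. Unset Printing Implicit Defensive.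
Import GRing.Theory Num.Theory.
Local Open Scope ring_scope.

(* Conventions: E plays the role of F_{q^{s-1}} (a finite field with
   q^(s-1) elements).  F_q is realised as its unique subfield of order q,
   i.e. the fixed points of x |-> x^q. *)

Definition Fq_star (E : finFieldType) (q : nat) : {set E} :=
  [set x : E | (x ^+ q == x) && (x != 0)].

Definition normN (E : finFieldType) (q s : nat) (x : E) : E :=
  x ^+ (\sum_(i < s.-1) q ^ i)%N.

Definition Hb_part (E : finFieldType) (q : nat) : {set E * E} :=
  [set v : E * E | v.2 \in Fq_star E q].

Definition Hb_adj (E : finFieldType) (q s : nat) (a b : E * E) : bool :=
  normN q s (a.1 + b.1) == a.2 * b.2.

(* Number of copies of K_{2,2} in H^b(s,q): pairs (S, T) with S a 2-subset
   of part A, T a 2-subset of part B, and all four edges present. (In a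
   bipartite graph every K_{2,2} subgraph has exactly two vertices on each side.) *)
Definition num_K22 (E : finFieldType) (q s : nat) : nat :=
  #|[set P : {set E * E} * {set E * E} |
      [&& P.1 \subset Hb_part E q, #|P.1| == 2%N,
          P.2 \subset Hb_part E q, #|P.2| == 2%N &
          [forall a in P.1, forall b in P.2, Hb_adj q s a b]]]|.

Definition odd_prime_power (q : nat) : Prop :=
  exists p k : nat, [/\ prime p, odd p, (0 < k)%N & q = (p ^ k)%N].

(* Main.v *)
Require Import Defs.
From mathcomp Require Import all_boot all_order all_algebra all_field.
From mathcomp Require Import ring lra zify.
Set Implicit Arguments. Unset Strict Implicit. Unset Printing Implicit Defensive.
Import GRing.Theory Num.Theory.
Local Open Scope ring_scope.

Lemma geo (q n : nat) : (0 < q)%N -> ((\sum_(i < n) q ^ i) * (q - 1) + 1 = q ^ n)%N.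
Proof.
move=> q0; elim: n => [|n IH]; first by rewrite big_ord0.
rewrite big_ord_recr /= mulnDl -addnAC IH expnS.
case: q q0 {IH} => // q _; rewrite subn1 /=; lia.
Qed.

Lemma sum_bool (I : finType) (P : pred I) : (\sum_(i : I) (P i : nat) = #|[set i | P i]|)%N.
Proof.
rewrite -sum1_card [RHS]big_mkcond; apply eq_bigr => i _; rewrite inE; by case: (P i).
Qed.

Lemma roots_le (E : finFieldType) (n : nat) (c : E) :
  (0 < n)%N -> (#|[set x : E | x ^+ n == c]| <= n)%N.
Proof.
move=> n0.
have := @max_poly_roots _ ('X^n - c%:P) (enum [set x : E | x ^+ n == c]).
rewrite size_XnsubC // -cardE ltnS; apply.
- by rewrite -size_poly_eq0 size_XnsubC.
- apply/allP => x; rewrite mem_enum inE => /eqP hx.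
  by rewrite /root !hornerE hx subrr.
- exact: enum_uniq.
Qed.


Section Fld.
Variables (E : finFieldType) (q s : nat).
Hypotheses (hq : (2 <= q)%N) (hs : (3 <= s)%N) (hE : #|E| = (q ^ s.-1)%N).

Let m := (\sum_(i < s.-1) q ^ i)%N.
Let Fs := Fq_star E q.

Lemma geoE : (m * (q - 1) + 1 = #|E|)%N.
Proof. by rewrite hE geo //; lia. Qed.

Lemma m_ge : (q.+1 <= m)%N.
Proof.
have h1 := geoE; rewrite hE in h1.
have h2 : (q ^ 2 <= q ^ s.-1)%N by rewrite leq_pexp2l; lia.
have h3 : (q.+1 * (q - 1) <= m * (q - 1))%N by rewrite expnS expn1 in h2; nia.
by rewrite leq_pmul2r in h3; lia.
Qed.

Lemma normNE (x : E) : normN q s x = x ^+ m. Proof. by []. Qed.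

Lemma N_q (x : E) : (normN q s x) ^+ q = normN q s x.
Proof.
rewrite normNE -exprM.
have -> : (m * q = #|E| + m.-1)%N.
  have := geoE; have := m_ge; case: q hq => // q' _; rewrite subn1 /=; nia.
rewrite exprD expf_card -exprS prednK //; have := m_ge; lia.
Qed.

Lemma N_Fs (x : E) : x != 0 -> normN q s x \in Fs.
Proof. move=> x0; rewrite inE N_q eqxx /= normNE expf_neq0 //. Qed.

Lemma Fs_div (x y : E) : x \in Fs -> y \in Fs -> x / y \in Fs.
Proof.
rewrite !inE => /andP [/eqP hx x0] /andP [/eqP hy y0].
by rewrite exprMn exprVn hx hy eqxx /= mulf_neq0 // invr_eq0.
Qed.

Lemma Fs_le : (#|Fs| <= q - 1)%N.
Proof.
apply: leq_trans (roots_le 1 _); last lia.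
apply: subset_leq_card; apply/subsetP => x; rewrite !inE => /andP [/eqP hx x0].
have: x ^+ (q - 1) * x = 1 * x by rewrite -exprSr subn1 prednK ?hx ?mul1r //; lia.
by move/(mulIf x0) ->.
Qed.

Definition Zc (c : E) := [set z : E | z ^+ m == c].

Lemma sumZ : (#|E| - 1 <= \sum_(c in Fs) #|Zc c|)%N.
Proof.
have -> : (\sum_(c in Fs) #|Zc c| = \sum_(z | z ^+ m \in Fs) 1)%N.
  rewrite [RHS](partition_big (fun z => z ^+ m) (fun c => c \in Fs)) //=.
  apply eq_bigr => c cF; rewrite -sum1_card; apply eq_bigl => z.
  rewrite inE; case: eqP => [->|]; by rewrite ?cF ?andbF ?andbT.
rewrite sum1_card subn1 -(cardC1 (0 : E)); apply: subset_leq_card.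
apply/subsetP => z; rewrite !inE => z0; exact: (N_Fs z0).
Qed.

Lemma Fs_ge : (q - 1 <= #|Fs|)%N.
Proof.
have h : (\sum_(c in Fs) #|Zc c| <= #|Fs| * m)%N.
  rewrite -sum_nat_const; apply leq_sum => c _; apply roots_le; have := m_ge; lia.
have := sumZ; have := geoE; have := m_ge => h1 h2 h3.
have h4 : (m * (q - 1) <= m * #|Fs|)%N by lia.
by rewrite leq_pmul2l in h4; lia.
Qed.

Lemma Zc_ge c : c \in Fs -> (m <= #|Zc c|)%N.
Proof.
move=> cF.
have h : (\sum_(c in Fs) (m - #|Zc c|) = 0)%N.
  rewrite sumnB; last by move=> c' _; apply roots_le; have := m_ge; lia.
  rewrite sum_nat_const; have := sumZ; have := geoE; have := Fs_le; nia.
have : (m - #|Zc c| <= \sum_(c in Fs) (m - #|Zc c|))%N.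
  by rewrite (bigD1 c) //= leq_addr.
rewrite h; lia.
Qed.

End Fld.


Section CN.
Variables (E : finFieldType) (q s : nat).
Hypotheses (hq : (2 <= q)%N) (hs : (3 <= s)%N) (hE : #|E| = (q ^ s.-1)%N).

Let m := (\sum_(i < s.-1) q ^ i)%N.
Let Fs := Fq_star E q.

Definition CN (a a' : E * E) :=
  [set b in Hb_part E q | Hb_adj q s a b && Hb_adj q s a' b].

Lemma CN_ge (a a' : E * E) : a.1 != a'.1 -> a.2 \in Fs -> a'.2 \in Fs ->
  (m - 1 <= #|CN a a'|)%N.
Proof.
case: a a' => [x1 x2] [x1' x2'] /= hx h2 h2'.
have cF : x2' / x2 \in Fs by exact: Fs_div.
have x20 : x2 != 0 by move: h2; rewrite inE => /andP [].
have d0 : x1' - x1 != 0 by rewrite subr_eq0 eq_sym.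
set Z := Zc q s (x2' / x2) :\ 1.
have hZ : (m - 1 <= #|Z|)%N.
  have h := Zc_ge hq hs hE cF; rewrite (cardsD1 1 (Zc q s (x2' / x2))) in h.
  rewrite leq_subLR; apply: (leq_trans h); by rewrite leq_add2r leq_b1.
apply: leq_trans hZ _.
pose w (z : E) := (x1' - x1) / (z - 1).
pose h (z : E) := (w z - x1, normN q s (w z) / x2).
have hinj : {in Z &, injective h}.
  move=> z1 z2 _ _ [] /addIr /(mulfI d0) /invr_inj /addIr //.
rewrite -(card_in_imset hinj); apply: subset_leq_card.
apply/subsetP => b /imsetP [z]; rewrite !inE => /andP [z1 /eqP hz] ->.
have z10 : z - 1 != 0 by rewrite subr_eq0.
have w0 : w z != 0 by rewrite /w mulf_neq0 // invr_eq0.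
rewrite /h /Hb_adj /=.
have := Fs_div (N_Fs hq hs hE w0) h2; rewrite inE => -> /=.
have -> : x1 + (w z - x1) = w z by ring.
rewrite [x2 * _]mulrC divfK // eqxx /=.
have -> : x1' + (w z - x1) = w z * z by rewrite /w; field.
rewrite normNE exprMn -normNE hz; by apply/eqP; field.
Qed.

End CN.


Lemma L_card (E : finType) :
  (2 * #|[set p : E * E | (enum_rank p.1 < enum_rank p.2)%N]| + #|E| = #|E| * #|E|)%N.
Proof.
have sw : injective (fun p : E * E => (p.2, p.1)).
  by apply: (can_inj (g := fun p : E * E => (p.2, p.1))) => [[]].
have hd : #|[set p : E * E | p.1 == p.2]| = #|E|.
  have -> : [set p : E * E | p.1 == p.2] = [set (x, x) | x in [set: E]].
    apply/setP => [[x y]]; rewrite !inE /=; apply/eqP/imsetP => [-> | [z _ [-> ->]]] //.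
    by exists y; rewrite ?inE.
  by rewrite card_imset ?cardsT // => x y [].
suff key : (2 * #|[set p : E * E | (enum_rank p.1 < enum_rank p.2)%N]|
   + #|[set p : E * E | p.1 == p.2]| = #|{: E * E}|)%N.
  by rewrite hd card_prod in key.
rewrite -!sum_bool mul2n -addnn.
rewrite {2}(reindex_inj sw) /= -!big_split /=.
transitivity (\sum_(p : E * E) 1)%N; last by rewrite sum1_card.
apply eq_bigr => [[x y]] _ /=.
case: (ltngtP (enum_rank x) (enum_rank y)) => h.
- by case: eqP => // e; rewrite e ltnn in h.
- by case: eqP => // e; rewrite e ltnn in h.
- by rewrite (enum_rank_inj (val_inj h)) eqxx.
Qed.

Section Count.
Variables (E : finFieldType) (q s : nat).
Hypotheses (hq : (2 <= q)%N) (hs : (3 <= s)%N) (hE : #|E| = (q ^ s.-1)%N).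

Let m := (\sum_(i < s.-1) q ^ i)%N.
Let Fs := Fq_star E q.

Definition K22c (S T : {set E * E}) : bool :=
  [&& S \subset Hb_part E q, #|S| == 2%N,
          T \subset Hb_part E q, #|T| == 2%N &
          [forall a in S, forall b in T, Hb_adj q s a b]].

Lemma num_ge :
  (#|[set p : E * E | (enum_rank p.1 < enum_rank p.2)%N]| * (q - 1) * (q - 1)
     * 'C(m - 1, 2) <= num_K22 E q s)%N.
Proof.
set L := [set p : E * E | _].
have -> : num_K22 E q s = (\sum_S \sum_T (K22c S T : nat))%N.
  by rewrite pair_bigA sum_bool.
set D := [set d : (E * E) * (E * E) |
   [&& (enum_rank d.1.1 < enum_rank d.2.1)%N, d.1.2 \in Fs & d.2.2 \in Fs]].
pose g (d : (E * E) * (E * E)) := [set d.1; d.2].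
have ginj : {in D &, injective g}.
  move=> [a a'] [c c']; rewrite !inE /= => /andP [r1 _] /andP [r2 _] e; rewrite /g /= in e.
  have ha : a \in [set c; c'] by rewrite -e !inE eqxx.
  have ha' : a' \in [set c; c'] by rewrite -e !inE eqxx orbT.
  have hc : c \in [set a; a'] by rewrite e !inE eqxx.
  rewrite !inE in ha ha' hc.
  have aa : a != a' by apply/eqP => h; rewrite h ltnn in r1.
  case/orP: ha => /eqP ea; subst a.
    case/orP: ha' => /eqP ea'; first by rewrite ea' eqxx in aa.
    by rewrite ea'.
  case/orP: ha' => /eqP ea'; subst a'.
    by have := ltn_trans r1 r2; rewrite ltnn.
  by rewrite eqxx in aa.
have step1 : (\sum_(S in [set g d | d in D]) \sum_T (K22c S T : nat)
               <= \sum_S \sum_T (K22c S T : nat))%N.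
  rewrite [X in (X <= _)%N]big_mkcond /=; apply: leq_sum => S _.
  by case: (S \in _).
apply: leq_trans step1; rewrite big_imset //=.
have step2 : forall d, d \in D -> ('C(m - 1, 2) <= \sum_T (K22c (g d) T : nat))%N.
  move=> [a a']; rewrite inE /= => /andP [r /andP [h1 h2]].
  have aa : a.1 != a'.1 by apply/eqP => h; rewrite h ltnn in r.
  have aa2 : a != a' by apply/eqP => h; rewrite h eqxx in aa.
  apply: (leq_trans (leq_bin2l _ (CN_ge hq hs hE aa h1 h2))).
  rewrite -cards_draws -sum_bool; apply: leq_sum => T _.
  case: andP => // -[/subsetP sT /eqP cT]; rewrite lt0b.
  rewrite /K22c /g cards2 aa2 cT eqxx /=.
  have -> : [set a; a'] \subset Hb_part E q.
    by apply/subsetP => x /set2P [] ->; rewrite inE /=; [exact h1 | exact h2].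
  have -> /= : T \subset Hb_part E q.
    by apply/subsetP => x /sT; rewrite inE => /andP [].
  apply/forallP => x; apply/implyP; rewrite !inE => hx.
  apply/forallP => y; apply/implyP => /sT; rewrite inE => /andP [_ /andP [e1 e2]].
  by case/orP: hx => /eqP ->.
apply: (@leq_trans (\sum_(d in D) 'C(m - 1, 2))%N); last exact: leq_sum.
rewrite sum_nat_const leq_mul2r; apply/orP; right.
pose f (d : (E * E) * (E * E)) := ((d.1.1, d.2.1), (d.1.2, d.2.2)).
have finj : injective f by move=> [[? ?] [? ?]] [[? ?] [? ?]] [-> -> -> ->].
have -> : D = [set f d | d in setX L (setX Fs Fs)].
  apply/setP => [[[x1 x1'] [x2 x2']]]; rewrite !inE /=; apply/idP/imsetP.
    move=> /andP [r /andP [h1 h2]].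
    by exists ((x1, x2), (x1', x2')); rewrite //= !inE /= r h1 h2.
  by move=> [[[y1 y2] [y1' y2']]]; rewrite !inE /= => /andP [r /andP [h1 h2]] [-> -> -> ->]; rewrite r h1 h2.
rewrite card_imset ?cardsX // -mulnA leq_mul2l; apply/orP; right.
by apply: leq_mul; apply: Fs_ge hq hs hE.
Qed.

End Count.


Lemma final_rat (e r Q M l c n : rat) : 0 < e -> 6 <= e * r -> 3 <= r -> r * r <= Q ->
  M * (r - 1) + 1 = Q -> 2 * l + Q = Q * Q -> 2 * c = (M - 1) * (M - 2) ->
  l * (r - 1) * (r - 1) * c <= n -> (1 - e) * Q ^+ 4 / 4 <= n.
Proof.
move=> e0 er r3 rQ hQ hl hc hn.
have key : 4 * (l * (r - 1) * (r - 1) * c) = (Q * Q - Q) * (Q - r) * (Q - 2 * r + 1).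
  have -> : l = (Q * Q - Q) / 2 by lra.
  have -> : c = (M - 1) * (M - 2) / 2 by lra.
  by rewrite -hQ; field.
set t := Q - 2 * r.
have t0 : 0 <= t by rewrite /t; nra.
have Q0 : 0 <= Q by nra.
have h1 : Q * t <= Q * Q - Q by rewrite /t; nra.
have h2 : t <= Q - r by rewrite /t; lra.
have h3 : t <= Q - 2 * r + 1 by rewrite /t; lra.
have h4 : Q * t * t * t <= (Q * Q - Q) * (Q - r) * (Q - 2 * r + 1).
  have g1 : 0 <= Q * t by apply: mulr_ge0.
  have g2 : 0 <= Q * t * t by apply: mulr_ge0.
  have g3 : Q * t * t <= (Q * Q - Q) * (Q - r) by apply: ler_pM.
  by apply: ler_pM.
have h5 : Q * t * t * t - (Q ^+ 4 - 6 * r * Q ^+ 3) = 4 * Q * r * r * (3 * Q - 2 * r).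
  by rewrite /t; ring.
have h6 : 0 <= 4 * Q * r * r * (3 * Q - 2 * r).
  apply: mulr_ge0; [nra | nra].
have h7 : 6 * r <= e * Q.
  have : e * (r * r) <= e * Q by rewrite ler_pM2l.
  nra.
have Q3 : 0 <= Q ^+ 3 by apply: exprn_ge0.
have h8 : (1 - e) * Q ^+ 4 <= Q ^+ 4 - 6 * r * Q ^+ 3.
  rewrite -subr_ge0.
  have -> : Q ^+ 4 - 6 * r * Q ^+ 3 - (1 - e) * Q ^+ 4 = Q ^+ 3 * (e * Q - 6 * r) by ring.
  by apply: mulr_ge0 => //; lra.
have h9 : Q ^+ 4 - 6 * r * Q ^+ 3 <= Q * t * t * t by lra.
lra.
Qed.


Lemma bin2_2 n : ('C(n, 2) * 2 = n * n.-1)%N.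
Proof.
rewrite bin2 muln2 halfK oddM; case: n => //= n.
by case: (odd n) => //=; rewrite subn0.
Qed.

Unset Implicit Arguments.
Set Strict Implicit.

Theorem lemma4p5 (s : nat) (hs : (3 <= s)%N) :
  forall eps : rat, 0 < eps ->
  exists Q : nat, forall (q : nat), odd_prime_power q -> (Q <= q)%N ->
  forall E : finFieldType, #|E| = (q ^ s.-1)%N ->
    (1 - eps) * (q ^ (4 * s.-1))%:R / 4%:R <= (num_K22 E q s)%:R.
Proof.
move=> eps e0.
exists (maxn 3 (Num.Def.archi_bound (6 / eps))) => q _ hQ E hE.
have hq : (2 <= q)%N by move: hQ; rewrite geq_max => /andP [h _]; lia.
have hb : (Num.Def.archi_bound (6 / eps) <= q)%N by move: hQ; rewrite geq_max => /andP [_ h].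
have hnum := num_ge hq hs hE.
have hL := L_card E.
have hgeo := geoE hq hs hE.
have hm := m_ge hq hs hE.
set m := (\sum_(i < s.-1) q ^ i)%N in hnum hgeo hm.
set l := #|[set p : E * E | _]| in hnum hL.
have hQq : (q * q <= #|E|)%N.
  rewrite hE mulnn leq_pexp2l //; lia.
have hc := bin2_2 (m - 1).
have -> : (q ^ (4 * s.-1))%:R = (#|E|%:R : rat) ^+ 4 by rewrite hE -natrX -expnM mulnC.
apply: (@final_rat eps q%:R #|E|%:R m%:R l%:R 'C(m - 1, 2)%:R) => //.
- have h1 : 6 / eps < (Num.Def.archi_bound (6 / eps))%:R.
    by apply: archi_boundP; apply: divr_ge0 => //; apply: Order.POrderTheory.ltW.
  have h2 : (Num.Def.archi_bound (6 / eps))%:R <= q%:R :> rat by rewrite ler_nat.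
  have h3 : eps * (6 / eps) <= eps * q%:R by rewrite ler_pM2l //; lra.
  have en : eps != 0 by apply: lt0r_neq0.
  by move: h3; rewrite mulrC divfK.
- by rewrite (ler_nat _ 3 q); lia.
- by rewrite -natrM ler_nat.
- have hg := congr1 (fun n => n%:R : rat) hgeo; move: hg.
  rewrite /= natrD natrM natrB ?(ltnW hq) //; lra.
- have hg := congr1 (fun n => n%:R : rat) hL; move: hg.
  rewrite /= natrD !natrM; lra.
- have hg := congr1 (fun n => n%:R : rat) hc; move: hg.
  rewrite /= !natrM !natrB; try lia.
  have -> : (m - 1).-1 = (m - 2)%N by lia.
  rewrite natrB; try lia.
  lra.
- have hg : (l * (q - 1) * (q - 1) * 'C(m - 1, 2))%:R <= (num_K22 E q s)%:R :> rat.
    by rewrite ler_nat.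
  move: hg; rewrite !natrM !natrB ?(ltnW hq) //.
Qed.
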